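(* Let $K$ be a field of characteristic $0$, let $a,r\in K$ with $a\neq 0$ and $r\notin\{-1,1,1-a,-1-a\}$, and put \[ b=\frac{r^2-1}{a},\qquad c=a+b+2r. \] Assume that $ab$, $bc$, $ac$ are pairwise distinct, so that \[ E':\ y^2=(x+ab)(x+bc)(x+ac) \] is an elliptic curve over $K$, and let $P=[0,abc]\in E'(K)$. Then $5P=\mathcal{O}$ if and only if \begin{align*} &(-4 r^2 + 4 r^4)a^4 + (4 r - 20 r^3 + 16 r^5) a^3 + ( -1 + 16 r^2 - 40 r^4 + 24 r^6)a^2\\ &\quad + (-4 r + 24 r^3 - 36 r^5 + 16 r^7)a -4 r^2 + 12 r^4 - 12 r^6 + 4 r^8=0. \end{align*}
   Context: With these definitions $ab+1=r^2$, $ac+1=(a+r)^2$ and $bc+1$ is also a square, so $\{a,b,c\}$ is a Diophantine triple. $\mathcal{O}$ denotes the point at infinity (neutral element) of $E'$. *)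

(* Defs.v *)
From HB Require Import structures.
From mathcomp Require Import all_boot all_order all_algebra.
Set Implicit Arguments. Unset Strict Implicit. Unset Printing Implicit Defensive.
Import Order.TTheory GRing.Theory Num.Theory.
Local Open Scope ring_scope.

Inductive ecpoint (K : Type) := EInf | EPt of K & K.
Arguments EInf {K}.

Section ECLaw.
Variable K : fieldType.
Variables a2 a4 a6 : K.

Definition on_curve (P : ecpoint K) : bool :=
  match P with
  | EInf => true
  | EPt x y => y ^+ 2 == x ^+ 3 + a2 * x ^+ 2 + a4 * x + a6
  end.

(* Note: a6 does not enter the addition formulas; it only determines the curve. *)
Definition ec_add (P Q : ecpoint K) : ecpoint K :=
  match P, Q with
  | EInf, _ => Q
  | _, EInf => P
  | EPt x1 y1, EPt x2 y2 =>
      if (x1 == x2) && (y1 + y2 == 0) then EInf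
      else
        let l := if x1 == x2
                 then (3%:R * x1 ^+ 2 + 2%:R * a2 * x1 + a4) / (2%:R * y1)
                 else (y2 - y1) / (x2 - x1) in
        let x3 := l ^+ 2 - a2 - x1 - x2 in
        EPt x3 (l * (x1 - x3) - y1)
  end.

Definition ec_mul (n : nat) (P : ecpoint K) : ecpoint K := iter n (ec_add P) EInf.
End ECLaw.

(* The curve y^2 = (x+e1)(x+e2)(x+e3), expanded to Weierstrass coefficients. *)
Definition cub_a2 (K : fieldType) (e1 e2 e3 : K) : K := e1 + e2 + e3.
Definition cub_a4 (K : fieldType) (e1 e2 e3 : K) : K := e1 * e2 + e1 * e3 + e2 * e3.
Definition cub_a6 (K : fieldType) (e1 e2 e3 : K) : K := e1 * e2 * e3.

Definition cub_mul (K : fieldType) (e1 e2 e3 : K) (n : nat) (P : ecpoint K) :=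
  ec_mul (cub_a2 e1 e2 e3) (cub_a4 e1 e2 e3) n P.

(* Main.v *)
Require Import Defs.
From HB Require Import structures.
From mathcomp Require Import all_boot all_order all_algebra.
From mathcomp Require Import ring.
Import Order.TTheory GRing.Theory Num.Theory.
Local Open Scope ring_scope.

Lemma add_tan (K : fieldType) (A2 A4 x y : K) : y + y != 0 ->
  ec_add A2 A4 (EPt x y) (EPt x y) =
  EPt (((3%:R * x ^+ 2 + 2%:R * A2 * x + A4) / (2%:R * y)) ^+ 2 - A2 - x - x)
      ((3%:R * x ^+ 2 + 2%:R * A2 * x + A4) / (2%:R * y) * (x - (((3%:R * x ^+ 2 + 2%:R * A2 * x + A4) / (2%:R * y)) ^+ 2 - A2 - x - x)) - y).
Proof. by move=> h; rewrite /ec_add eqxx (negbTE h). Qed.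

Lemma add_chord (K : fieldType) (A2 A4 x1 y1 x2 y2 : K) : x1 != x2 ->
  ec_add A2 A4 (EPt x1 y1) (EPt x2 y2) =
  EPt (((y2 - y1) / (x2 - x1)) ^+ 2 - A2 - x1 - x2)
      ((y2 - y1) / (x2 - x1) * (x1 - (((y2 - y1) / (x2 - x1)) ^+ 2 - A2 - x1 - x2)) - y1).
Proof. by move=> h; rewrite /ec_add (negbTE h). Qed.

Theorem lemma1 (K : fieldType) (charK : [pchar K] =i pred0) (a r b c : K)
  (ha : a != 0) (hr1 : r != 1) (hrm1 : r != -1) (hr2 : r != 1 - a)
  (hr3 : r != -1 - a)
  (hb : b = (r ^+ 2 - 1) / a) (hc : c = a + b + 2%:R * r)
  (d1 : a * b != b * c) (d2 : a * b != a * c) (d3 : b * c != a * c) :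
  cub_mul (a * b) (b * c) (a * c) 5 (EPt 0 (a * b * c)) = EInf <->
  (- 4%:R * r ^+ 2 + 4%:R * r ^+ 4) * a ^+ 4
  + (4%:R * r - 20%:R * r ^+ 3 + 16%:R * r ^+ 5) * a ^+ 3
  + (- 1 + 16%:R * r ^+ 2 - 40%:R * r ^+ 4 + 24%:R * r ^+ 6) * a ^+ 2
  + (- 4%:R * r + 24%:R * r ^+ 3 - 36%:R * r ^+ 5 + 16%:R * r ^+ 7) * a
  - 4%:R * r ^+ 2 + 12%:R * r ^+ 4 - 12%:R * r ^+ 6 + 4%:R * r ^+ 8 = 0.
Proof.
have n2 : (2%:R : K) != 0 by move/pcharf0P: charK => ->.
have n4 : (4%:R : K) != 0 by move/pcharf0P: charK => ->.
have rm1 : r ^+ 2 - 1 != 0.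
  have -> : r ^+ 2 - 1 = (r - 1) * (r + 1) by ring.
  by rewrite mulf_neq0 // ?subr_eq0 // addr_eq0.
have sm1 : (a + r) ^+ 2 - 1 != 0.
  have -> : (a + r) ^+ 2 - 1 = (r - (1 - a)) * (r - (-1 - a)) by ring.
  by rewrite mulf_neq0 // subr_eq0.
have hbe : a * b = r ^+ 2 - 1 by rewrite hb; field.
have hce : a * c = (a + r) ^+ 2 - 1 by rewrite hc hb; field.
have y0e : a * (a * b * c) = (r ^+ 2 - 1) * ((a + r) ^+ 2 - 1).
  by rewrite -hbe -hce; ring.
have y0n : a * b * c != 0.
  by apply: contra_neq (mulf_neq0 rm1 sm1) => H; rewrite -y0e H mulr0.
have s1 : a * a + (r ^+ 2 - 1) + 2%:R * r * a != 0.
  by have -> : a * a + (r ^+ 2 - 1) + 2%:R * r * a = (a + r) ^+ 2 - 1 by ring.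
set F := (X in X = 0).
have Fe : F = 4%:R * (a * (a * b * c)) * (r * (a + r) * (r * a + r ^+ 2 - 1)) - a ^+ 2.
  rewrite y0e /F; ring.
have Fa : a ^+ 2 * (4%:R * (a * b * c) * (-(a + b + r) - a * b * c) + 1) = - F.
  by rewrite Fe hc hb; field; rewrite ?ha ?s1 ?rm1 ?n2 ?n4 ?oner_neq0 //.
rewrite /cub_mul /ec_mul; change (iter 5 ?f ?x) with (f (f (f (f (f x))))).
set A2 := cub_a2 _ _ _. set A4 := cub_a4 _ _ _.
set y0 := a * b * c.
set Y2 := -(a + b + r) - y0.
have E2 : ec_add A2 A4 (EPt 0 y0) (EPt 0 y0) = EPt 1 Y2.
  rewrite add_tan; last by rewrite -mulr2n -mulr_natr mulf_neq0.
  rewrite /A2 /A4 /cub_a2 /cub_a4 /Y2 /y0; congr EPt; rewrite hc hb; field; rewrite ?ha ?s1 ?rm1 ?n2 ?n4 ?oner_neq0 //.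
set X3 := - 4%:R * y0 * Y2.
set Y3 := - (Y2 - y0) * X3 - y0.
have E3 : ec_add A2 A4 (EPt 0 y0) (EPt 1 Y2) = EPt X3 Y3.
  rewrite add_chord; last by rewrite eq_sym oner_neq0.
  have HX : ((Y2 - y0) / (1 - 0)) ^+ 2 - A2 - 0 - 1 = X3.
    rewrite /A2 /cub_a2 /X3 /Y2 /y0; rewrite hc hb; field; rewrite ?ha ?s1 ?rm1 ?n2 ?n4 ?oner_neq0 //.
  by rewrite HX /Y3 subr0 divr1 sub0r mulrN mulNr.
rewrite E2 E3.
have Fdef : a ^+ 2 * (4%:R * y0 * Y2 + 1) = - F by [].
have y0n' : y0 != 0 by [].
case: (eqVneq X3 0) => HX3.
  have HY2 : Y2 = 0.
    apply/eqP; move: HX3; rewrite /X3 => /eqP.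
    by rewrite mulf_eq0 mulf_eq0 (negbTE y0n') oppr_eq0 (negbTE n4).
  have Fn : F != 0.
    by rewrite -oppr_eq0 -Fdef HY2 mulr0 add0r mulr1 expf_neq0.
  split; last by move=> HF; rewrite HF eqxx in Fn.
  rewrite HX3.
  case E4: (ec_add A2 A4 (EPt 0 y0) (EPt 0 Y3)) => [|x4 y4] //.
  move: E4; rewrite /ec_add eqxx /=; case: ifP => // _ [Hx4 _].
  have x41 : x4 = 1.
    rewrite -Hx4 /A2 /A4 /cub_a2 /cub_a4 /y0; rewrite hc hb; field; rewrite ?ha ?s1 ?rm1 ?n2 ?n4 ?oner_neq0 //.
  by rewrite x41 (_ : (0 == 1 :> K) = false) // eq_sym oner_eq0.
rewrite add_chord; last by rewrite eq_sym.
set l := (Y3 - y0) / (X3 - 0).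
set X4 := l ^+ 2 - A2 - 0 - X3.
have L : l ^+ 2 * X3 ^+ 2 = (Y3 - y0) ^+ 2 by rewrite /l subr0 -exprMn divfK.
have KX : X4 * X3 ^+ 2 = 4%:R * y0 ^+ 2 * (4%:R * y0 * Y2 + 1).
  have -> : X4 * X3 ^+ 2 = l ^+ 2 * X3 ^+ 2 - (A2 + X3) * X3 ^+ 2 by rewrite /X4; ring.
  rewrite L /Y3 /X3 /Y2 /y0 /A2 /cub_a2 hc hb; field; rewrite ?ha ?s1 ?rm1 ?n2 ?n4 ?oner_neq0 //.
have HX4 : X4 = 0 <-> F = 0.
  split => H.
    apply/eqP; rewrite -oppr_eq0 -Fdef; apply/eqP.
    have : 4%:R * y0 ^+ 2 * (4%:R * y0 * Y2 + 1) = 0 by rewrite -KX H mul0r.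
    move/eqP; rewrite mulf_eq0 => /orP [|/eqP ->]; last by rewrite mulr0.
    by rewrite mulf_eq0 (negbTE n4) expf_eq0 (negbTE y0n') andbF.
  have H2 : 4%:R * y0 * Y2 + 1 = 0.
    have : a ^+ 2 * (4%:R * y0 * Y2 + 1) = 0 by rewrite Fdef H oppr0.
    by move/eqP; rewrite mulf_eq0 expf_eq0 (negbTE ha) andbF /= => /eqP.
  have : X4 * X3 ^+ 2 == 0 by rewrite KX H2 mulr0.
  by rewrite mulf_eq0 expf_eq0 (negbTE HX3) andbF orbF => /eqP.
rewrite /ec_add -/X4; case: ifP => [/andP [/eqP H0 _] | H].
  by split => // _; apply/HX4.
split => // /HX4 HF.
by move: H; rewrite HF eqxx /= subr0 mulr0 sub0r subrr eqxx.
Qed.
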